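(* Let $C(n)$ be the number of distinct nonempty words $\omega$ such that $\omega\omega\omega$ is a factor of $\mathbb{T}[1,n]$. Then $C(t_m)=0$ for $m\leq6$, and for $m\geq7$, $C(t_m)=\frac{t_{m-5}+t_{m-6}-m+3}{2}$.
   Context: The Tribonacci sequence $\mathbb{T}=x_1x_2x_3\cdots$ is the fixed point (infinite word starting with $a$) of the substitution $\sigma(a)=ab$, $\sigma(b)=ac$, $\sigma(c)=a$ over $\{a,b,c\}$. For $n\ge1$, $\mathbb{T}[1,n]=x_1\cdots x_n$ is its prefix of length $n$. The Tribonacci numbers are $t_m=|\sigma^m(a)|$ for $m\ge0$, with $t_{-2}=0$, $t_{-1}=1$; thus $t_0=1,t_1=2,t_2=4$ and $t_m=t_{m-1}+t_{m-2}+t_{m-3}$. *)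

(* Defs.v *)
From mathcomp Require Import all_boot all_order all_algebra.
Set Implicit Arguments. Unset Strict Implicit. Unset Printing Implicit Defensive.

Definition la : nat := 0.
Definition lb : nat := 1.
Definition lc : nat := 2.

Definition sigma_letter (x : nat) : seq nat :=
  if x == la then [:: la; lb]
  else if x == lb then [:: la; lc]
  else if x == lc then [:: la]
  else [::].

Definition sigma (w : seq nat) : seq nat := flatten (map sigma_letter w).

Definition sigma_pow_a (m : nat) : seq nat := iter m sigma [:: la].

Definition trib (m : nat) : nat := size (sigma_pow_a m).

(* The letter x_{i+1} of the fixed point T = x_1 x_2 x_3 ...:
   sigma^{i+1}(a) is a prefix of T of length >= i+1. *)
Definition Tx (i : nat) : nat := nth la (sigma_pow_a i.+1) i.

Definition Tprefix (n : nat) : seq nat := [seq Tx i | i <- iota 0 n].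

Definition factors (u : seq nat) : seq (seq nat) :=
  [seq take l (drop i u) | i <- iota 0 (size u), l <- iota 0 (size u).+1].

(* Any such w is itself a factor of T[1,n], so enumerating the
   factors of T[1,n] and removing duplicates counts them all exactly once. *)
Definition cube_count (n : nat) : nat :=
  let p := Tprefix n in
  size (undup [seq w <- factors p | (w != [::]) && infix (w ++ w ++ w) p]).

(* Main.v *)
Require Import Defs.
From mathcomp Require Import all_boot all_order all_algebra zify.
Set Implicit Arguments. Unset Strict Implicit. Unset Printing Implicit Defensive.

Notation A := sigma_pow_a.
Notation T := Tx.
Notation t := trib.

Lemma sigma_cat u v : sigma (u ++ v) = sigma u ++ sigma v.
Proof. by rewrite /sigma map_cat flatten_cat. Qed.

Lemma A_succ m : A m.+1 = sigma (A m).
Proof. by rewrite /sigma_pow_a iterS. Qed.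

Lemma A_rec m : A m.+3 = A m.+2 ++ A m.+1 ++ A m.
Proof.
elim: m => [|m IH]; first by [].
by rewrite [A m.+4]A_succ [in sigma (A m.+3)]IH !sigma_cat -!A_succ.
Qed.

Lemma A_prefix m : exists r, A m.+1 = A m ++ r.
Proof.
case: m => [|[|m]]; first by exists [:: lb].
  by exists [:: la; lc].
by rewrite A_rec; eexists.
Qed.

Lemma A_prefix_le m M : m <= M -> exists r, A M = A m ++ r.
Proof.
elim: M => [|M IH]; first by rewrite leqn0 => /eqP ->; exists [::]; rewrite cats0.
rewrite leq_eqVlt => /orP[/eqP ->|]; first by exists [::]; rewrite cats0.
rewrite ltnS => /IH [r Hr]. have [r' ->] := A_prefix M.
by rewrite Hr -catA; eexists.
Qed.

Lemma t_rec m : t m.+3 = t m.+2 + t m.+1 + t m.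
Proof. by rewrite /trib A_rec !size_cat addnA. Qed.

Lemma t0 : t 0 = 1. Proof. by []. Qed.
Lemma t1 : t 1 = 2. Proof. by []. Qed.
Lemma t2 : t 2 = 4. Proof. by []. Qed.

Lemma t_pos m : 0 < t m.
Proof. have [r hr] := @A_prefix_le 0 m isT. by rewrite /trib hr. Qed.

Lemma t_incr m : t m < t m.+1.
Proof.
case: m => [|[|m]]; [by []|by []|].
rewrite t_rec. have := t_pos m.+1. lia.
Qed.

Lemma t_mono m n : m < n -> t m < t n.
Proof.
elim: n => [//|n IH]. rewrite ltnS leq_eqVlt => /orP[/eqP ->|/IH h].
  exact: t_incr.
exact: ltn_trans h (t_incr n).
Qed.

Lemma t_ge m : m < t m.
Proof. elim: m => [//|m IH]. have := t_incr m. lia. Qed.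

Lemma t_mono_le m n : m <= n -> t m <= t n.
Proof. rewrite leq_eqVlt => /orP[/eqP ->//|/t_mono]; apply: ltnW. Qed.

Lemma t_inj_lt m n : t m < t n -> m < n.
Proof. case: (ltnP m n) => // /t_mono_le. lia. Qed.

Lemma Tx_A i M : i < t M -> T i = nth 0 (A M) i.
Proof.
move=> hi. rewrite /Tx.
have [le|le] := leqP i.+1 M.
  have [r ->] := A_prefix_le le. rewrite nth_cat.
  have h : i < size (A i.+1) by have := t_ge i.+1; rewrite /trib; lia.
  by rewrite h.
have [r ->] := A_prefix_le (ltnW le). by rewrite nth_cat hi.
Qed.

Lemma Tprefix_A n M : n <= t M -> Tprefix n = take n (A M).
Proof.
move=> hn. apply: (@eq_from_nth _ 0).
  by rewrite /Tprefix size_map size_iota size_take; move: hn; rewrite /trib; case: ltngtP; lia.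
move=> i; rewrite /Tprefix size_map size_iota => hi.
rewrite (nth_map 0) ?size_iota // nth_iota // add0n nth_take //.
apply: Tx_A; lia.
Qed.

Lemma Tprefix_t m : Tprefix (t m) = A m.
Proof. by rewrite (@Tprefix_A _ m) // take_size. Qed.

Lemma sigma_letter_lt3 x : all (fun y => y < 3) (sigma_letter x).
Proof. by rewrite /sigma_letter; case: ifP => //; case: ifP => //; case: ifP. Qed.

Lemma sigma_lt3 w : all (fun y => y < 3) (sigma w).
Proof. elim: w => [//|x w IH]. by rewrite /sigma /= all_cat sigma_letter_lt3. Qed.

Lemma A_lt3 m : all (fun y => y < 3) (A m).
Proof. by case: m => [//|m]; rewrite A_succ sigma_lt3. Qed.

Lemma T_lt3 n : T n < 3.
Proof.
rewrite (@Tx_A n n (t_ge n)).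
by apply: (allP (A_lt3 n)); apply: mem_nth; have := t_ge n; rewrite /trib.
Qed.

Definition pos n := size (sigma (Tprefix n)).
Definition seg i l := map T (iota i l).

Lemma seg_cat i a b : seg i (a + b) = seg i a ++ seg (i + a) b.
Proof. by rewrite /seg iotaD map_cat. Qed.

Lemma size_seg i l : size (seg i l) = l.
Proof. by rewrite size_map size_iota. Qed.

Lemma nth_seg i l j : j < l -> nth 0 (seg i l) j = T (i + j).
Proof. by move=> h; rewrite (nth_map 0) ?size_iota // nth_iota. Qed.

Lemma Tprefix_seg n : Tprefix n = seg 0 n.
Proof. by []. Qed.

Lemma Tprefix_S n : Tprefix n.+1 = Tprefix n ++ [:: T n].
Proof. by rewrite !Tprefix_seg -addn1 seg_cat. Qed.

Lemma nth_Tprefix n i : i < n -> nth 0 (Tprefix n) i = T i.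
Proof. by move=> h; rewrite Tprefix_seg nth_seg. Qed.

Lemma size_Tprefix n : size (Tprefix n) = n.
Proof. exact: size_seg. Qed.

Lemma sigma1 x : sigma [:: x] = sigma_letter x.
Proof. by rewrite /sigma /= cats0. Qed.

Lemma Tprefix_pos n : Tprefix (pos n) = sigma (Tprefix n).
Proof.
have hn : n <= t n by have := t_ge n; lia.
rewrite (Tprefix_A hn) /pos (Tprefix_A hn).
have e : A n.+1 = sigma (take n (A n)) ++ sigma (drop n (A n)).
  by rewrite -sigma_cat cat_take_drop A_succ.
have h2 : size (sigma (take n (A n))) <= t n.+1 by rewrite /trib e size_cat leq_addr.
by rewrite (Tprefix_A h2) e take_size_cat.
Qed.

Definition bl x := size (sigma_letter x).

Lemma pos_S n : pos n.+1 = pos n + bl (T n).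
Proof. by rewrite /pos Tprefix_S sigma_cat size_cat sigma1. Qed.

Lemma T_block n j : j < bl (T n) -> T (pos n + j) = nth 0 (sigma_letter (T n)) j.
Proof.
move=> hj.
have h : pos n + j < pos n.+1 by rewrite pos_S ltn_add2l.
rewrite -(nth_Tprefix h) Tprefix_pos Tprefix_S sigma_cat sigma1 nth_cat.
by rewrite /pos ltnNge leq_addr /= addKn.
Qed.

Lemma pos0 : pos 0 = 0. Proof. by []. Qed.

Lemma T_cases n : [\/ T n = 0, T n = 1 | T n = 2].
Proof. by have := T_lt3 n; case: (T n) => [|[|[|]]]; auto; constructor. Qed.

Lemma T_pos n : T (pos n) = 0.
Proof.
have := T_block (n:=n) (j:=0). rewrite addn0 => -> //.
  by case: (T_cases n) => ->.
by case: (T_cases n) => ->.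
Qed.

Lemma pos_c n : T n = 2 -> pos n.+1 = pos n + 1.
Proof. by move=> h; rewrite pos_S h. Qed.

Lemma pos_nc n : T n <> 2 -> pos n.+1 = pos n + 2 /\ T (pos n + 1) = (T n).+1.
Proof.
move=> h. rewrite pos_S T_block /bl.
  by case: (T_cases n) h => ->.
by case: (T_cases n) h => ->.
Qed.

Lemma pos_inc n : pos n < pos n.+1 <= pos n + 2.
Proof.
case: (T_cases n) => h.
- by have [-> _] := pos_nc (n:=n) (ltac:(by rewrite h)); lia.
- by have [-> _] := pos_nc (n:=n) (ltac:(by rewrite h)); lia.
- rewrite pos_c //; lia.
Qed.

Lemma cover j : exists n, pos n <= j < pos n.+1.
Proof.
elim: j => [|j [n hn]]; first by exists 0; have := pos_inc 0; rewrite pos0; lia.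
have := pos_inc n.
case: (ltnP j.+1 (pos n.+1)) => h.
  by exists n; lia.
exists n.+1. have := pos_inc n.+1. lia.
Qed.

Lemma a_pos j : T j = 0 -> exists n, pos n = j.
Proof.
move=> hj. have [n hn] := cover j.
case: (eqVneq (pos n) j) => [e|ne]; first by exists n.
case: (eqVneq (T n) 2) => [h2|h2].
  by move: hn; rewrite pos_c //; lia.
have h2' : T n <> 2 by apply/eqP.
have [e1 e2] := pos_nc h2'.
have : j = pos n + 1 by move: hn ne; rewrite e1; lia.
by move=> ej; rewrite ej e2 in hj.
Qed.

Lemma nonA_prev j : T j <> 0 -> 0 < j /\ T j.-1 = 0.
Proof.
move=> hj. have [n hn] := cover j.
case: (eqVneq (pos n) j) => [e|ne]; first by rewrite -e T_pos in hj.
have := pos_inc n => hi.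
have ej : j = (pos n).+1 by lia.
split; first by lia.
by rewrite ej /= T_pos.
Qed.

Lemma nonA_pos j : T j <> 0 -> exists n, j = pos n + 1 /\ T n <> 2 /\ T j = (T n).+1.
Proof.
move=> hj. have [n hn] := cover j.
case: (eqVneq (pos n) j) => [e|ne]; first by rewrite -e T_pos in hj.
case: (eqVneq (T n) 2) => [h2|h2].
  by move: hn; rewrite pos_c //; lia.
have h2' : T n <> 2 by apply/eqP.
have [e1 e2] := pos_nc h2'.
have ej : j = pos n + 1 by move: hn ne; rewrite e1; lia.
by exists n; rewrite ej e2; split => //; split => //; apply/eqP.
Qed.

Lemma c_next j : T j = 2 -> T j.+1 = 0.
Proof.
move=> hj. have [|n [ej [hn2 hTj]]] := nonA_pos (j:=j); first by rewrite hj.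
have [e1 _] := pos_nc hn2.
have -> : j.+1 = pos n.+1 by rewrite e1 ej addn1 addn2.
exact: T_pos.
Qed.

Lemma pos_mono n l : pos n + l <= pos (n + l).
Proof.
elim: l => [|l IH]; first by rewrite !addn0.
have h := pos_inc (n + l). rewrite !addnS. lia.
Qed.

Lemma pos_2 n : pos n + 3 <= pos (n.+2).
Proof.
have h1 := pos_inc n. have h2 := pos_inc n.+1.
case: (eqVneq (T n) 2) => [e|ne].
  have e1 : T n.+1 <> 2 by rewrite (c_next e).
  have [e3 _] := pos_nc e1. lia.
have ne' : T n <> 2 by apply/eqP.
have [e3 _] := pos_nc ne'. lia.
Qed.

Lemma pos_lt m n : m < n -> pos m < pos n.
Proof.
move=> h. have := pos_mono m (n - m). rewrite subnKC ?(ltnW h) //. lia.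
Qed.

Lemma pos_le m n : m <= n -> pos m <= pos n.
Proof. rewrite leq_eqVlt => /orP[/eqP ->//|/pos_lt]; apply: ltnW. Qed.

Lemma pos_lt_inv m n : pos m < pos n -> m < n.
Proof. case: (ltnP m n) => // /pos_le. lia. Qed.

Lemma pos_inj m n : pos m = pos n -> m = n.
Proof.
move=> e. case: (ltngtP m n) => // /pos_lt; rewrite e; lia.
Qed.

Definition dec x := if x == 1 then 0 else if x == 2 then 1 else 2.

Lemma decode n : T n = dec (T (pos n + 1)).
Proof.
case: (eqVneq (T n) 2) => [e|ne].
  by rewrite -(pos_c e) T_pos e.
have ne' : T n <> 2 by apply/eqP.
have [_ ->] := pos_nc ne'. by case: (T_cases n) ne' => ->.
Qed.

Definition lastl x := if x == 0 then 1 else if x == 1 then 2 else 0.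

Lemma T_last n : T (pos n.+1).-1 = lastl (T n).
Proof.
case: (eqVneq (T n) 2) => [e|ne].
  by rewrite (pos_c e) addn1 /= T_pos e.
have ne' : T n <> 2 by apply/eqP.
have [-> e2] := pos_nc ne'. rewrite addn2 /= -addn1 e2.
by case: (T_cases n) ne' => ->.
Qed.

Lemma lastl_inj x y : x < 3 -> y < 3 -> lastl x = lastl y -> x = y.
Proof. by case: x => [|[|[|]]] //; case: y => [|[|[|]]]. Qed.

Lemma seg_block n : seg (pos n) (bl (T n)) = sigma_letter (T n).
Proof.
apply: (@eq_from_nth _ 0); first by rewrite size_seg.
move=> j; rewrite size_seg => hj. by rewrite nth_seg // T_block.
Qed.

Lemma seg_pos n l : seg (pos n) (pos (n + l) - pos n) = sigma (seg n l).
Proof.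
elim: l => [|l IH]; first by rewrite addn0 subnn.
have hm := pos_mono n l.
rewrite -[l.+1]addn1 (seg_cat n l 1) sigma_cat -IH.
rewrite addnA addn1 pos_S.
have -> : pos (n + l) + bl (T (n + l)) - pos n = (pos (n+l) - pos n) + bl (T (n+l)) by lia.
rewrite seg_cat; congr (_ ++ _).
have -> : pos n + (pos (n + l) - pos n) = pos (n + l) by lia.
by rewrite seg_block /seg /= sigma1.
Qed.

Fixpoint X k := match k with 0 => [:: 0; 0] | k'.+1 => sigma (X k') ++ [:: 0] end.
Definition L k := size (X k).
Definition s k := t k.+3 - t k.

Lemma X_lt3 k : all (fun y => y < 3) (X k).
Proof. case: k => [//|k] /=. by rewrite all_cat sigma_lt3. Qed.

Lemma sigma_head w : w != [::] -> all (fun y => y < 3) w -> exists r, sigma w = 0 :: r.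
Proof.
case: w => [//|x w] _ /andP[hx _]. rewrite /sigma /= /sigma_letter.
by move: hx; case: x => [|[|[|]]] //= _; eexists.
Qed.

Lemma X_take k : t k <= L k /\ take (t k) (X k) = A k.
Proof.
elim: k => [//|k [h1 h2]].
have e : X k = A k ++ drop (t k) (X k) by rewrite -h2 cat_take_drop.
rewrite /L /= e sigma_cat -A_succ -catA size_cat.
split; first by rewrite /trib leq_addr.
by rewrite take_size_cat.
Qed.

Lemma size_sigma_ge w : all (fun y => y < 3) w -> size w <= size (sigma w).
Proof.
elim: w => [//|x w IH] /andP[hx hw]. rewrite /sigma /= size_cat -/(sigma w).
have := IH hw. move: hx; rewrite /sigma_letter; case: x => [|[|[|]]] //= _; lia.
Qed.

Lemma X_per k : take (L k - t k) (X k) = drop (t k) (X k).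
Proof.
elim: k => [//|k IH].
have [h1 h2] := X_take k.
set v := drop (t k) (X k).
have e1 : X k = A k ++ v by rewrite /v -h2 cat_take_drop.
set w := drop (L k - t k) (X k).
have e2 : X k = v ++ w by rewrite /w /v -IH cat_take_drop.
have hw : size w = t k by rewrite /w size_drop -/(L k); lia.
have hwl : all (fun y => y < 3) w by have := X_lt3 k; rewrite e2 all_cat => /andP[].
have [r hr] : exists r, sigma w = 0 :: r.
  apply: sigma_head hwl. apply/eqP => e; rewrite e /= in hw; have := t_pos k; lia.
have eA : size (sigma (A k)) = t k.+1 by rewrite /trib A_succ.
have E1 : X k.+1 = sigma (A k) ++ sigma v ++ [:: 0] by rewrite /= e1 sigma_cat catA.
have E2 : X k.+1 = sigma v ++ sigma w ++ [:: 0] by rewrite /= e2 sigma_cat catA.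
have sz : size (sigma w) = t k.+1.
  have := congr1 size (etrans (esym E1) E2). rewrite !size_cat eA. lia.
have sL : L k.+1 - t k.+1 = (size (sigma v)).+1 by rewrite /L E2 !size_cat sz /=; lia.
rewrite sL [in drop _ _]E1 -eA drop_size_cat // E2.
rewrite -addn1 takeD take_size_cat // drop_size_cat // hr /=. by rewrite take0.
Qed.

Lemma X_per_nth k n : n + t k < L k -> nth 0 (X k) n = nth 0 (X k) (n + t k).
Proof.
move=> h. have := X_per k => e.
have -> : nth 0 (X k) n = nth 0 (take (L k - t k) (X k)) n by rewrite nth_take //; lia.
by rewrite e nth_drop addnC.
Qed.

Lemma s_pos k : pos (s k) = s k.+1.
Proof.
have hs : s k <= t k.+3 by rewrite /s leq_subr.
rewrite /pos (Tprefix_A hs) A_rec.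
have -> : s k = size (A k.+2 ++ A k.+1) by rewrite size_cat /s t_rec /trib; lia.
rewrite catA take_size_cat // sigma_cat -!A_succ size_cat /s [t k.+4]t_rec /trib.
lia.
Qed.

Lemma X_occ k : seg (s k) (L k) = X k.
Proof.
elim: k => [|k IH]; first by vm_compute.
have hp := seg_pos (s k) (L k). rewrite IH s_pos in hp.
set D := pos (s k + L k) - s k.+1 in hp.
have hD : size (sigma (X k)) = D by rewrite -hp size_seg.
have hL : L k.+1 = D + 1 by rewrite /L /= size_cat hD.
rewrite hL seg_cat hp /=; congr (_ ++ _).
have -> : s k.+1 + D = pos (s k + L k).
  rewrite /D. have := pos_le (leq_addr (L k) (s k)). rewrite s_pos. lia.
by rewrite /seg /= T_pos.
Qed.

Definition per i p l := forall j, i <= j -> j + p < i + l -> T j = T (j + p).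
Definition lmax i p := i = 0 \/ T i.-1 <> T (i.-1 + p).

Definition Qconc p i l := exists k, p = t k /\ l <= L k /\
  (forall j, j < l -> T (i + j) = nth 0 (X k) j) /\ s k <= i.

Lemma T_small i : i < 6 -> T i = 0 -> T i.+1 = 0 -> False.
Proof.
by case: i => [|[|[|[|[|[|i]]]]]] //= _; vm_compute.
Qed.

Lemma Q_base i l : lmax i 1 -> 2 <= l -> per i 1 l -> Qconc 1 i l.
Proof.
move=> hlm hl hper.
have e1 : T i = T (i + 1) by apply: hper => //; lia.
have hTi : T i = 0.
  case: (eqVneq (T i) 0) => [//|ne].
  have ne' : T (i+1) <> 0 by rewrite -e1; apply/eqP.
  have [_ h] := nonA_prev ne'. by rewrite addn1 /= in h; rewrite h eqxx in ne.
have [n hn] := a_pos hTi.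
have hT1 : T (i + 1) = 0 by rewrite -e1.
have hc : T n = 2.
  case: (eqVneq (T n) 2) => [//|ne].
  have ne' : T n <> 2 by apply/eqP.
  have [_ h] := pos_nc ne'. by rewrite hn hT1 in h.
have hl2 : l <= 2.
  case: (leqP l 2) => // h3.
  have e2 : T (i + 1) = T (i + 1 + 1) by apply: hper; lia.
  have hn1 : T n.+1 <> 2 by rewrite (c_next hc).
  have [_ h] := pos_nc hn1.
  by rewrite (pos_c hc) hn (c_next hc) -e2 hT1 in h.
have hi : 6 <= i.
  case: (leqP 6 i) => // h6.
  by exfalso; apply: (T_small h6 hTi); rewrite -addn1.
exists 0; split => //; split => //; split => //.
move=> j hj. have : j = 0 \/ j = 1 by lia.
by case=> ->; rewrite ?addn0 ?hTi ?hT1.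
Qed.

Lemma Q_step p : 1 < p ->
  (forall p', p' < p -> 0 < p' -> forall i l, lmax i p' -> 3 * p' <= l + 1 -> per i p' l -> Qconc p' i l) ->
  forall i l, lmax i p -> 3 * p <= l + 1 -> per i p l -> Qconc p i l.
Proof.
move=> hp IH i l hlm hl hper.
have hTi : T i = 0.
  case: (eqVneq (T i) 0) => [//|ne].
  have ne1 : T i <> 0 by apply/eqP.
  have [hi0 hprev] := nonA_prev ne1.
  have e : T i = T (i + p) by apply: hper => //; lia.
  have ne2 : T (i + p) <> 0 by rewrite -e.
  have [_ hprev2] := nonA_prev ne2.
  case: hlm => [hi|hne]; first by lia.
  exfalso; apply: hne. rewrite hprev.
  have -> : i.-1 + p = (i + p).-1 by lia.
  by rewrite hprev2.
have [n0 hn0] := a_pos hTi.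
have hTip : T (i + p) = 0 by rewrite -(hper i) //; lia.
have [m hm] := a_pos hTip.
have hn0m : n0 < m by apply: pos_lt_inv; rewrite hm hn0; lia.
set p' := m - n0.
have hp'0 : 0 < p' by rewrite /p'; lia.
have hpp' : pos (n0 + p') = i + p by rewrite /p' subnKC ?(ltnW hn0m).
have hp'p : p' < p.
  case: (ltnP p' p) => // h.
  have h1 := pos_le (m := n0 + p) (n := n0 + p') ltac:(lia).
  have h2 := pos_mono (n0.+2) (p - 2).
  have h3 := pos_2 n0.
  rewrite (_ : n0.+2 + (p - 2) = n0 + p) in h2; last by lia.
  lia.
have ex : exists l0, i + l <= pos (n0 + l0) + 1.
  exists l. have := pos_mono n0 l. lia.
case: (ex_minnP ex) => l' hl'1 hl'min.
have hl'b : forall j, j < l' -> pos (n0 + j) + 2 <= i + l.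
  move=> j hj. case: (leqP (i + l) (pos (n0 + j) + 1)) => h; last by lia.
  have := hl'min j h. lia.
have hl'c : pos (n0 + l') <= i + l.
  case: l' hl'1 hl'min hl'b => [|l'] _ _ hb; first by rewrite addn0 hn0 leq_addr.
  have h1 := hb l' (ltnSn _). have /andP[h2 h3] := pos_inc (n0 + l'). rewrite addnS. lia.
have Pstep : forall j, j + p' < l' -> pos (n0 + j + p') = pos (n0 + j) + p ->
    T (n0 + j) = T (n0 + j + p').
  move=> j hj hP.
  rewrite (decode (n0 + j)) (decode (n0 + j + p')) hP.
  congr dec.
  have hge : i <= pos (n0 + j) by rewrite -hn0; apply: pos_le; lia.
  have hb := hl'b (j + p') hj. rewrite addnA hP in hb.
  have -> : pos (n0 + j) + p + 1 = pos (n0 + j) + 1 + p by lia.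
  apply: hper; lia.
have Pall : forall j, j + p' <= l' -> pos (n0 + j + p') = pos (n0 + j) + p.
  elim => [|j IHj] hj; first by rewrite !addn0 hpp' hn0.
  have hj' : j + p' < l' by lia.
  have IH' := IHj (ltnW hj').
  have hT := Pstep j hj' IH'.
  have -> : n0 + j.+1 + p' = (n0 + j + p').+1 by lia.
  rewrite pos_S IH' -hT addnS pos_S. lia.
have TE : forall j, j + p' < l' -> T (n0 + j) = T (n0 + j + p').
  move=> j hj. apply: Pstep => //. apply: Pall. lia.
have hper' : per n0 p' l'.
  move=> j hj1 hj2. have := TE (j - n0). rewrite subnKC //. apply. lia.
have hlm' : lmax n0 p'.
  case: (eqVneq n0 0) => [->|hn0']; first by left.
  right => e.
  have hipos : 0 < i by rewrite -hn0 -pos0; apply: pos_lt; lia.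
  case: hlm => [hi0|hne]; first by lia.
  apply: hne.
  have L1 := T_last n0.-1. rewrite prednK ?lt0n // hn0 in L1.
  have L2 := T_last (n0.-1 + p').
  rewrite (_ : (n0.-1 + p').+1 = n0 + p') in L2; last by rewrite -addSn prednK // lt0n.
  rewrite hpp' -e -L1 in L2.
  rewrite -L2. congr T. lia.
have hl' : 3 * p' <= l' + 1.
  case: (leqP (3 * p') (l' + 1)) => // hc.
  exfalso.
  have hbig : i + 3 * p <= pos (n0 + l') + 2 by lia.
  case: (leqP l' p') => ha.
    have := pos_le (m := n0 + l') (n := n0 + p') ltac:(lia). rewrite hpp'. lia.
  case: (ltnP l' (2 * p')) => hb.
    have e := Pall (l' - p') ltac:(lia).
    rewrite (_ : n0 + (l' - p') + p' = n0 + l') in e; last by lia.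
    have h1 := pos_lt (n := n0 + p') (m := n0 + (l' - p')) ltac:(lia).
    rewrite hpp' in h1. lia.
  have e := Pall (l' - p') ltac:(lia).
  rewrite (_ : n0 + (l' - p') + p' = n0 + l') in e; last by lia.
  have e2 := Pall (l' - 2 * p') ltac:(lia).
  rewrite (_ : n0 + (l' - 2 * p') + p' = n0 + (l' - p')) in e2; last by lia.
  have h1 := pos_le (n := n0 + (p' - 2)) (m := n0 + (l' - 2 * p')) ltac:(lia).
  have h2 := pos_2 (n0 + (p' - 2)).
  rewrite (_ : (n0 + (p' - 2)).+2 = n0 + p') in h2; last by lia.
  rewrite hpp' in h2. lia.
have [k [ek [hlk [hX hsk]]]] := IH p' hp'p hp'0 n0 l' hlm' hl' hper'.
have hsegX : seg n0 l' = take l' (X k).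
  apply: (@eq_from_nth _ 0); first by rewrite size_seg size_takel.
  move=> j; rewrite size_seg => hj. by rewrite nth_seg // nth_take // hX.
have Hseg := seg_pos n0 l'. rewrite hn0 hsegX in Hseg.
set D := pos (n0 + l') - i in Hseg.
have hD : size (sigma (take l' (X k))) = D by rewrite -Hseg size_seg.
have eXk1 : X k.+1 = sigma (take l' (X k)) ++ sigma (drop l' (X k)) ++ [:: 0].
  by rewrite /= catA -sigma_cat cat_take_drop.
have [htk htA] := X_take k.
exists k.+1; split; [|split; [|split]].
- have Hp := seg_pos n0 p'. rewrite hn0 hpp' in Hp.
  have := congr1 size Hp. rewrite size_seg.
  have -> : seg n0 p' = A k.
    apply: (@eq_from_nth _ 0); first by rewrite size_seg ek.
    move=> j; rewrite size_seg => hj. rewrite nth_seg // hX; last by lia.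
    by rewrite -htA nth_take // -ek.
  rewrite -A_succ /trib. lia.
- rewrite /L eXk1 !size_cat hD /=.
  have := pos_mono n0 l'. rewrite hn0. lia.
- move=> j hj.
  case: (ltnP j D) => hjD.
    by rewrite -(nth_seg i hjD) Hseg eXk1 nth_cat hD hjD.
  have -> : j = D by rewrite /D; lia.
  have -> : i + D = pos (n0 + l') by rewrite /D; have := pos_mono n0 l'; rewrite hn0; lia.
  rewrite T_pos eXk1 nth_cat hD ltnn subnn.
  case: (eqVneq (drop l' (X k)) [::]) => [->//|ne].
  have hall : all (fun y => y < 3) (drop l' (X k)).
    by apply/allP => x /mem_drop hx; exact: (allP (X_lt3 k) x hx).
  by have [r ->] := sigma_head ne hall.
- rewrite -s_pos -hn0. exact: pos_le.
Qed.

Lemma Q p : 0 < p -> forall i l, lmax i p -> 3 * p <= l + 1 -> per i p l -> Qconc p i l.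
Proof.
elim/ltn_ind: p => p IH hp i l hlm hl hper.
case: (eqVneq p 1) => [e1|ne1].
  subst p. apply: Q_base => //. lia.
have hp1 : 1 < p by lia.
by apply: (Q_step hp1) => // p' hp' hp'0; apply: IH.
Qed.

Lemma lext i p l : per i p l -> exists i0, i0 <= i /\ lmax i0 p /\ per i0 p (l + (i - i0)).
Proof.
elim: i l => [|i IH] l hper.
  by exists 0; split => //; split; [left|rewrite subn0 addn0].
case: (eqVneq (T i) (T (i + p))) => [e|ne].
  have hper1 : per i p (l + 1).
    move=> j hj1 hj2. case: (eqVneq j i) => [->//|nj].
    apply: hper; lia.
  have [i0 [h1 [h2 h3]]] := IH _ hper1.
  exists i0; split; first by lia.
  split => //. move=> j hj1 hj2. apply: h3 => //. lia.
exists i.+1; split => //; split; last by rewrite subnn addn0.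
by right => /= e; rewrite e eqxx in ne.
Qed.

Lemma L_incr k : L k < L k.+1.
Proof.
rewrite /L /= size_cat addn1 ltnS. apply: size_sigma_ge. exact: X_lt3.
Qed.

Lemma L_mono k k' : k < k' -> L k < L k'.
Proof.
elim: k' => [//|k' IH]. rewrite ltnS leq_eqVlt => /orP[/eqP ->|/IH h].
  exact: L_incr.
exact: ltn_trans h (L_incr k').
Qed.

Lemma size_sigma_cnt w : all (fun y => y < 3) w -> size (sigma w) + count_mem 2 w = 2 * size w.
Proof.
elim: w => [//|x w IH] /andP[hx hw]. rewrite /sigma /= size_cat -/(sigma w).
have := IH hw. move: hx; case: x => [|[|[|]]] //= _; lia.
Qed.

Lemma cnt_sigma w : all (fun y => y < 3) w ->
  [/\ count_mem 0 (sigma w) = size w, count_mem 1 (sigma w) = count_mem 0 w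
    & count_mem 2 (sigma w) = count_mem 1 w].
Proof.
elim: w => [//|x w IH] /andP[hx hw]. rewrite /sigma /= !count_cat -/(sigma w).
have [h0 h1 h2] := IH hw. rewrite h0 h1 h2.
by move: hx; case: x => [|[|[|]]] //= _; split; lia.
Qed.

Lemma L_rec4 k : L k.+4 + L k = 2 * L k.+3.
Proof.
have c1 : forall k, count_mem 2 (X k.+1) = count_mem 1 (X k).
  move=> k0. rewrite /= count_cat. have [_ _ ->] := cnt_sigma (X_lt3 k0). by rewrite /= ?addn0.
have c2 : forall k, count_mem 1 (X k.+1) = count_mem 0 (X k).
  move=> k0. rewrite /= count_cat. have [_ -> _] := cnt_sigma (X_lt3 k0). by rewrite /= ?addn0.
have c3 : forall k, count_mem 0 (X k.+1) = L k + 1.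
  move=> k0. rewrite /= count_cat. have [-> _ _] := cnt_sigma (X_lt3 k0). by [].
have e : count_mem 2 (X k.+3) = L k + 1 by rewrite c1 c2 c3.
have := size_sigma_cnt (X_lt3 k.+3). rewrite e.
rewrite /L [X k.+4]/= size_cat /= -/(L _). lia.
Qed.

Lemma t_rec4 k : t k.+4 + t k = 2 * t k.+3.
Proof. rewrite [t k.+4]t_rec [t k.+3]t_rec. lia. Qed.

Lemma L_small : [/\ L 0 = 2, L 1 = 5, L 2 = 11, L 3 = 21 & (L 4 = 40 /\ L 5 = 75 /\ L 6 = 139)].
Proof. by vm_compute. Qed.

Lemma t_small : [/\ t 0 = 1, t 1 = 2, t 2 = 4, t 3 = 7 & (t 4 = 13 /\ t 5 = 24 /\ t 6 = 44)].
Proof. by vm_compute. Qed.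

Definition Iden k := 2 * L k.+3 + 3 + t k = 6 * t k.+3 + t k.+2.

Lemma L_iden k : Iden k.
Proof.
suff : Iden k /\ Iden k.+1 /\ Iden k.+2 /\ Iden k.+3 by case.
elim: k => [|k [h0 [h1 [h2 h3]]]].
  by vm_compute.
split => //; split => //; split => //.
move: h0 h3; rewrite /Iden.
have := L_rec4 k.+3. have := t_rec4 k. have := t_rec4 k.+3. have := t_rec4 k.+2.
lia.
Qed.

Lemma seg_Am m : A m = seg 0 (t m).
Proof. by rewrite -Tprefix_t. Qed.

Lemma nth_www (w : seq nat) x : x + size w < 3 * size w ->
  nth 0 (w ++ w ++ w) x = nth 0 (w ++ w ++ w) (x + size w).
Proof.
move=> h. set n := size w.
have E : forall y, nth 0 (w ++ w ++ w) y =
   if y < n then nth 0 w y else if y < 2 * n then nth 0 w (y - n) else nth 0 w (y - 2 * n).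
  move=> y. rewrite nth_cat -/n. case: ifP => // h1.
  rewrite nth_cat -/n. case: ifP => h2; first by rewrite ifT //; lia.
  rewrite ifF; last by apply/negbTE; rewrite -leqNgt; move: h2 => /negbT; rewrite -leqNgt; lia.
  congr nth. lia.
rewrite !E.
case: (ltnP x n) => h1.
  have b1 : (x + n < n) = false by apply/negbTE; rewrite -leqNgt; lia.
  have b2 : (x + n < 2 * n) = true by apply/idP; lia.
  by rewrite b1 b2 addnK ?h1.
have b1 : (x + n < n) = false by apply/negbTE; rewrite -leqNgt; lia.
have b3 : (x < n) = false by apply/negbTE; rewrite -leqNgt; lia.
have b4 : (x + n < 2 * n) = false by apply/negbTE; rewrite -leqNgt; lia.
have b5 : (x < 2 * n) = true by apply/idP; lia.
rewrite b1 ?b3 b4 b5. congr nth. lia.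
Qed.

Definition F k j := take (t k) (drop j (X k)).
Definition rho k := L k - 3 * t k.

Lemma small_k k : k <= 2 -> L k + 1 = 3 * t k.
Proof. by case: k => [|[|[|]]] //; vm_compute. Qed.

Lemma cube_to m w : w != [::] -> infix (w ++ w ++ w) (A m) ->
  exists k j, [/\ 3 <= k, k + 4 <= m, j <= rho k & w = F k j].
Proof.
move=> hw /infixP [s1 [s2 hA]].
set p := size w. have hp : 0 < p by rewrite /p lt0n size_eq0.
set i := size s1.
have hsz3 : size (w ++ w ++ w) = 3 * p by rewrite !size_cat /p; lia.
have hsz : i + 3 * p <= t m.
  have := congr1 size hA. rewrite !size_cat -/(trib m) -/i -/p. rewrite size_cat in hsz3. lia.
have hT : forall x, x < 3 * p -> T (i + x) = nth 0 (w ++ w ++ w) x.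
  move=> x hx. rewrite (@Tx_A _ m); last by lia.
  by rewrite hA nth_cat /i ltnNge leq_addr /= addKn nth_cat hsz3 hx.
have hper : per i p (3 * p).
  move=> j hj1 hj2.
  have -> : j = i + (j - i) by lia.
  rewrite hT; last by lia.
  rewrite nth_www; last by rewrite -/p; lia.
  rewrite -addnA hT //. lia.
have [i0 [hi0 [hlm hper']]] := lext hper.
have [k [ek [hlk [hX hsk]]]] := Q hp hlm (ltac:(lia) : 3 * p <= 3 * p + (i - i0) + 1) hper'.
exists k, (i - i0).
have hk3 : 3 <= k.
  case: (leqP 3 k) => // hk. have := small_k (ltac:(lia) : k <= 2). lia.
split => //.
- have h1 : t k.+3 + 2 * t k <= t m.
    move: hsk; rewrite /s. have := t_mono_le (leq_addl 3 k). rewrite addnC addn3 => hh. lia.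
  have h2 : t k.+3 < t m by have := t_pos k; lia.
  have := t_inj_lt h2. lia.
- rewrite /rho; lia.
- apply: (@eq_from_nth _ 0).
    rewrite /F size_takel; first by rewrite -ek. rewrite size_drop -/(L k). lia.
  move=> x hx. rewrite -/p in hx.
  have -> : nth 0 w x = nth 0 (w ++ w ++ w) x by rewrite nth_cat hx.
  rewrite -hT; last by lia.
  have -> : i + x = i0 + (i - i0 + x) by lia.
  rewrite hX; last by lia.
  by rewrite /F nth_take -?ek // nth_drop.
Qed.

Lemma L_bounds k : 3 <= k -> [/\ 3 * t k <= L k, L k < 4 * t k & s k + L k <= t k.+4].
Proof.
move=> hk. have -> : k = (k - 3).+3 by lia.
set k' := k - 3.
have I := L_iden k'. rewrite /Iden in I.
have h2 : t k' + 3 <= t k'.+2.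
  case: k' {I} => [|k'']; first by vm_compute.
  rewrite t_rec. have := t_pos k''.+1. have := t_pos k''. have := t_incr k''. have := t_incr k''.+1. lia.
have r3 := t_rec k'. have r4 := t_rec k'.+1. have r5 := t_rec k'.+2. have r6 := t_rec k'.+3.
have p0 := t_pos k'. have i1 := t_incr k'. have i2 := t_incr k'.+1. have i3 := t_incr k'.+2. have r7 := t_rec k'.+4. have i4 := t_incr k'.+3.
rewrite /s. split; lia.
Qed.

Lemma X_nth_occ k y : y < L k -> T (s k + y) = nth 0 (X k) y.
Proof. by move=> h; rewrite -[in RHS](X_occ k) nth_seg. Qed.

Lemma F_inj_lt k j j' : 3 <= k -> j < j' -> j' <= rho k -> F k j = F k j' -> False.
Proof.
move=> hk hjj hj' eF.
have [b1 b2 b3] := L_bounds hk.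
set p := t k. set d := j' - j.
have hp : 0 < p := t_pos k.
have hrho : rho k < p by rewrite /rho /p; lia.
have hx : forall z, z + p < L k -> nth 0 (X k) z = nth 0 (X k) (z + p) by move=> z; apply: X_per_nth.
have hrot : forall x, x < p -> nth 0 (X k) (j + x) = nth 0 (X k) (j' + x).
  move=> x hxp.
  have := congr1 (fun w => nth 0 w x) eF. rewrite /F /= !nth_take // !nth_drop //.
have claim1 : forall z, j <= z -> z + d < L k -> nth 0 (X k) z = nth 0 (X k) (z + d).
  elim/ltn_ind => z IH hz1 hz2.
  case: (ltnP z (j + p)) => hz3.
    have := hrot (z - j) ltac:(lia). rewrite subnKC //.
    have -> : j' + (z - j) = z + d by rewrite /d; lia.
    by [].
  have e1 : nth 0 (X k) (z - p) = nth 0 (X k) z.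
    rewrite (hx (z - p)); last by lia. by rewrite subnK //; lia.
  have e2 : nth 0 (X k) (z - p + d) = nth 0 (X k) (z + d).
    rewrite (hx (z - p + d)); last by lia. congr nth; lia.
  rewrite -e1 -e2. apply: IH; lia.
have claim2 : forall z, z + d < L k -> nth 0 (X k) z = nth 0 (X k) (z + d).
  move=> z hz. case: (leqP j z) => hjz; first exact: claim1.
  rewrite (hx z); last by lia.
  rewrite (hx (z + d)); last by lia.
  rewrite claim1; last by lia. 2: by lia.
  congr nth. lia.
have hper : per (s k) d (L k).
  move=> y hy1 hy2.
  have -> : y = s k + (y - s k) by lia.
  rewrite -addnA X_nth_occ; last by lia.
  rewrite X_nth_occ; last by lia.
  apply: claim2; lia.
have [i0 [hi0 [hlm hper']]] := lext hper.
have hd : 0 < d by rewrite /d; lia.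
have [k' [ek' [hl' _]]] := Q hd hlm (ltac:(lia) : 3 * d <= L k + (s k - i0) + 1) hper'.
have : t k' < t k by rewrite -ek' /d -/p; lia.
move/t_inj_lt/L_mono. lia.
Qed.

Lemma F_inj k j j' : 3 <= k -> j <= rho k -> j' <= rho k -> F k j = F k j' -> j = j'.
Proof.
move=> hk hj hj' e.
case: (ltngtP j j') => // h.
  by exfalso; apply: (F_inj_lt hk h hj' e).
by exfalso; apply: (F_inj_lt hk h hj (esym e)).
Qed.

Lemma size_F k j : 3 <= k -> j <= rho k -> size (F k j) = t k.
Proof.
move=> hk hj. have [b1 b2 b3] := L_bounds hk.
rewrite /F size_takel // size_drop -/(L k). move: hj; rewrite /rho. lia.
Qed.

Lemma seg_take_drop a l n : a + l <= n -> take l (drop a (seg 0 n)) = seg a l.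
Proof.
move=> h.
have -> : seg 0 n = seg 0 a ++ seg a l ++ seg (a + l) (n - (a + l)).
  by rewrite -seg_cat -seg_cat; congr seg; lia.
by rewrite drop_size_cat ?size_seg // take_size_cat ?size_seg.
Qed.

Lemma cube_from m k j : 3 <= k -> k + 4 <= m -> j <= rho k ->
  [/\ F k j != [::], infix (F k j ++ F k j ++ F k j) (A m) & F k j \in factors (A m)].
Proof.
move=> hk hkm hj.
have [b1 b2 b3] := L_bounds hk.
have hsm : s k + L k <= t m.
  apply: leq_trans b3 _. apply: t_mono_le. lia.
set p := t k. set a := s k + j.
have hp : 0 < p := t_pos k.
have hjr : j + 3 * p <= L k by move: hj; rewrite /rho /p; lia.
have hw : F k j = seg a p.
  apply: (@eq_from_nth _ 0); first by rewrite size_F // size_seg.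
  move=> x; rewrite size_F // => hx.
  rewrite nth_seg // /a -addnA X_nth_occ; last by lia.
  by rewrite /F nth_take // nth_drop.
have hshift : forall b, j <= b -> b + 2 * p <= L k -> seg (s k + b + p) p = seg (s k + b) p.
  move=> b hb1 hb2. apply: (@eq_from_nth _ 0); first by rewrite !size_seg.
  move=> x; rewrite size_seg => hx. rewrite !nth_seg //.
  rewrite -!addnA !X_nth_occ; try lia.
  rewrite (X_per_nth (n := b + x)); last by lia.
  congr nth; lia.
have hwww : F k j ++ F k j ++ F k j = seg a (p + p + p).
  rewrite hw (seg_cat a (p + p) p) (seg_cat a p p) -catA.
  have e1 : seg (a + p) p = seg a p by rewrite /a hshift //; lia.
  have e2 : seg (a + (p + p)) p = seg a p.
    have -> : a + (p + p) = s k + (j + p) + p by rewrite /a; lia.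
    rewrite hshift; last by lia. 2: by lia.
    by rewrite -e1 /a addnA.
  by rewrite e1 e2.
split.
- by rewrite -size_eq0 size_F // -lt0n.
- rewrite hwww seg_Am.
  have -> : seg 0 (t m) = seg 0 a ++ seg a (p + p + p) ++ seg (a + (p + p + p)) (t m - (a + (p + p + p))).
    by rewrite -seg_cat -seg_cat; congr seg; rewrite /a; lia.
  exact: infix_infix.
- rewrite hw seg_Am /factors. apply/allpairsP. exists (a, p) => /=.
  rewrite !mem_iota size_seg seg_take_drop //; last by rewrite /a; lia.
  split => //.
    apply/andP; split => //; rewrite /a; lia.
  rewrite in_cons mem_iota; apply/orP; right; apply/andP; split; lia.
Qed.

Definition blk k := map (F k) (iota 0 (rho k).+1).
Definition CL n := flatten [seq blk k | k <- iota 3 n].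

Lemma CL_S n : CL n.+1 = CL n ++ blk (n + 3).
Proof. by rewrite /CL -[n.+1]addn1 iotaD map_cat flatten_cat /= cats0 addnC. Qed.

Lemma mem_CL n w : (w \in CL n) = [exists k : 'I_(3 + n), exists j : 'I_(L k).+1,
   [&& 3 <= k, j <= rho k & w == F k j]].
Proof.
elim: n => [|n IH].
  rewrite /CL /=. apply/esym/existsP => [[k /existsP [j /and3P [hk _ _]]]].
  by have := ltn_ord k; lia.
rewrite CL_S mem_cat IH. apply/idP/idP.
  case/orP.
    case/existsP => k /existsP [j hj].
    apply/existsP; exists (widen_ord (ltac:(lia) : 3 + n <= 3 + n.+1) k).
    by apply/existsP; exists j.
  case/mapP => j; rewrite mem_iota add0n => hj ->.
  have hk : n + 3 < 3 + n.+1 by lia.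
  apply/existsP; exists (Ordinal hk).
  have hjL : j < (L (n + 3)).+1 by move: hj; rewrite /rho; lia.
  apply/existsP; exists (Ordinal hjL) => /=.
  apply/and3P; split => //; lia.
case/existsP => k /existsP [j /and3P [hk hj /eqP ->]].
case: (ltnP k (3 + n)) => hkn.
  apply/orP; left. apply/existsP; exists (Ordinal hkn).
  by apply/existsP; exists j; apply/and3P.
apply/orP; right.
have ek : (k : nat) = n + 3 by have := ltn_ord k; lia.
rewrite /blk -ek. apply/mapP; exists (nat_of_ord j) => //. rewrite mem_iota; lia.
Qed.

Lemma uniq_CL n : uniq (CL n).
Proof.
elim: n => [//|n IH].
rewrite CL_S cat_uniq IH andTb. apply/andP; split.
  apply/hasPn => w /mapP [j hj ->].
  rewrite mem_CL. apply/negP => /existsP [k /existsP [j' /and3P [hk hj' /eqP e]]].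
  move: hj; rewrite mem_iota add0n => hj.
  have := congr1 size e. rewrite size_F //; last by lia. rewrite size_F //.
  move/eqP; rewrite eqn_leq => /andP [h1 _].
  have hk3 : (k : nat) < n + 3 by have := ltn_ord k; lia.
  have := t_mono hk3. lia.
rewrite map_inj_in_uniq ?iota_uniq //.
move=> j j'; rewrite !mem_iota !add0n => hj hj'.
apply: F_inj; lia.
Qed.

Lemma size_CL n : size (CL n) = sumn [seq (rho k).+1 | k <- iota 3 n].
Proof.
elim: n => [//|n IH].
by rewrite CL_S size_cat IH -[n.+1]addn1 iotaD map_cat sumn_cat /= addn0 /blk size_map size_iota (addnC 3 n); lia.
Qed.

Lemma sum_iden n : 2 * sumn [seq (rho k).+1 | k <- iota 3 n.+1] + n + 4 = t n.+2 + t n.+1.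
Proof.
elim: n => [|n IH]; first by vm_compute.
have E : sumn [seq (rho k).+1 | k <- iota 3 n.+2] = sumn [seq (rho k).+1 | k <- iota 3 n.+1] + (rho n.+4).+1.
  rewrite -[n.+2]addn1 iotaD map_cat sumn_cat /= addn0. congr (_ + (rho _).+1); lia.
rewrite E. move: IH. set S := sumn _. move=> IH.
have I := L_iden n.+1. rewrite /Iden in I.
have [b1 _ _] := L_bounds (ltac:(lia) : 3 <= n.+4).
rewrite /rho.
have r := t_rec n.+1. have r0 := t_rec n.
lia.
Qed.

Lemma cube_count_CL m : cube_count (t m) = size (CL (m - 6)).
Proof.
rewrite /cube_count Tprefix_t. apply: perm_size. apply: uniq_perm.
- exact: undup_uniq.
- exact: uniq_CL.
move=> w. rewrite mem_undup mem_filter mem_CL. apply/idP/idP.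
  case/andP => /andP [hw hinf] _.
  have [k [j [hk hkm hj ->]]] := cube_to hw hinf.
  have hk' : k < 3 + (m - 6) by lia.
  apply/existsP; exists (Ordinal hk').
  have hjL : j < (L k).+1 by move: hj; rewrite /rho; lia.
  apply/existsP; exists (Ordinal hjL) => /=. by apply/and3P.
case/existsP => k /existsP [j /and3P [hk hj /eqP ->]].
have hkm : k + 4 <= m by have := ltn_ord k; lia.
have [h1 h2 h3] := cube_from hk hkm hj.
by rewrite h1 h2 h3.
Qed.

Import GRing.Theory Num.Theory.
Local Open Scope ring_scope.

Theorem theorem5p2 :
  (forall m : nat, (m <= 6)%N -> cube_count (trib m) = 0%N) /\
  (forall m : nat, (7 <= m)%N ->
     2%:Z * (cube_count (trib m))%:Z
       = (trib (m - 5))%:Z + (trib (m - 6))%:Z - m%:Z + 3%:Z).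
Proof.
split.
  move=> m hm. rewrite cube_count_CL.
  by rewrite (_ : (m - 6 = 0)%N) //; apply/eqP; rewrite subn_eq0.
move=> m hm. rewrite cube_count_CL size_CL.
have H := sum_iden (m - 7).
rewrite (_ : ((m - 7).+2 = m - 5)%N) in H; last by lia.
rewrite (_ : ((m - 7).+1 = m - 6)%N) in H; last by lia.
move: H. set S := sumn _. set a := trib (m - 5). set b := trib (m - 6).
move=> H. lia.
Qed.
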